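(* Let $s > 3/2$ be real. For $1/3 \le A \le 1$ define \[ L(A;s) = \sum_{\substack{i,j,k\in\mathbb{Z}\\ (i,j,k)\neq(0,0,0)}} \left(\frac{A+1}{A(i+j)^2+(j+k)^2+(i+k)^2}\right)^s . \] Then \[ \frac{\partial}{\partial A} L(A;s)\Big|_{A=1/2} = 0 \qquad\text{and}\qquad \frac{\partial^2}{\partial A^2} L(A;s)\Big|_{A=1/2} > 0 . \]
   Context: The function $L(A;s)$ is the Epstein zeta function of the normalised cuboidal lattice. For $u,v>0$ with $A=u^2/v^2$, the cuboidal lattice is generated by $(u,v,0)$, $(u,0,v)$, $(0,v,v)$. For $1/3\le A\le 1$ it is scaled so that its minimum nonzero squared norm is $1$, i.e. $v = 1/\sqrt{A+1}$. Its quadratic form is then $g(A;i,j,k) = \frac{1}{A+1}\bigl(A(i+j)^2+(j+k)^2+(i+k)^2\bigr)$, and the series defining $L(A;s)$ converges for $s>3/2$. The value $A=1/2$ corresponds to the body-centred cubic lattice, and $A=1$ to the face-centred cubic lattice. *)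

(* Defs.v *)
From Stdlib Require Import Reals ZArith List.
From Coquelicot Require Import Coquelicot.
Open Scope R_scope.

Definition Qform (A : R) (i j k : Z) : R :=
  A * (IZR (i + j))^2 + (IZR (j + k))^2 + (IZR (i + k))^2.

(* The summand ((A+1)/Q(i,j,k))^s; zero at the origin (excluded from the sum). *)
Definition term (A s : R) (i j k : Z) : R :=
  if (Z.eqb i 0 && Z.eqb j 0 && Z.eqb k 0)%bool then 0
  else Rpower ((A + 1) / Qform A i j k) s.

Definition zrange (N : nat) : list Z :=
  map (fun n => (Z.of_nat n - Z.of_nat N)%Z) (seq 0 (2 * N + 1)).

Definition sumZ (l : list Z) (f : Z -> R) : R :=
  fold_right (fun z acc => f z + acc) 0 l.

Definition box_sum (A s : R) (N : nat) : R :=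
  sumZ (zrange N) (fun i => sumZ (zrange N) (fun j => sumZ (zrange N)
    (fun k => term A s i j k))).

(* L(A;s): the sum over Z^3 \ {0}; since all terms are nonnegative (A > 0),
   the unordered sum equals the limit of the box partial sums. *)
Definition L (A s : R) : R := real (Lim_seq (box_sum A s)).

(* Main.v *)
Require Import Defs.
From Stdlib Require Import Reals ZArith List.
From Coquelicot Require Import Coquelicot.
From Stdlib Require Import Lra Lia Rcomplete.
Open Scope R_scope.

Fixpoint zs (N : nat) (f : Z -> R) : R :=
  match N with
  | O => f 0%Z
  | S n => zs n f + f (Z.of_nat (S n)) + f (- Z.of_nat (S n))%Z
  end.

Definition sl (l : list nat) (h : nat -> R) : R :=
  fold_right (fun n acc => h n + acc) 0 l.

Lemma sumZ_map (g : nat -> Z) l f : sumZ (map g l) f = sl l (fun n => f (g n)).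
Proof. induction l; simpl; auto. unfold sumZ in *; simpl. rewrite IHl; auto. Qed.

Lemma sl_app l1 l2 h : sl (l1 ++ l2) h = sl l1 h + sl l2 h.
Proof. induction l1; simpl; [ring|]. unfold sl in *; simpl; rewrite IHl1; ring. Qed.

Lemma sl_mapS l h : sl (map S l) h = sl l (fun n => h (S n)).
Proof. induction l; simpl; auto. unfold sl in *; simpl; rewrite IHl; ring. Qed.

Lemma sl_ext l h1 h2 : (forall n, h1 n = h2 n) -> sl l h1 = sl l h2.
Proof. intros H; induction l; simpl; auto. unfold sl in *; simpl; rewrite IHl, H; ring. Qed.

Lemma sumZ_zs N f : sumZ (zrange N) f = zs N f.
Proof.
  unfold zrange; rewrite sumZ_map.
  revert f; induction N as [|N IH]; intro f.
  - simpl. unfold sl; simpl. ring.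
  - replace (2 * S N + 1)%nat with (S ((2 * N + 1) + 1)) by lia.
    cbn [seq]. rewrite seq_app. rewrite <- (seq_shift (2 * N + 1) 0).
    change (sl (0%nat :: (map S (seq 0 (2 * N + 1)) ++ seq (1 + (2 * N + 1)) 1))
      (fun n : nat => f (Z.of_nat n - Z.of_nat (S N))%Z))
     with (f (Z.of_nat 0 - Z.of_nat (S N))%Z + sl ((map S (seq 0 (2 * N + 1)) ++ seq (1 + (2 * N + 1)) 1))
      (fun n : nat => f (Z.of_nat n - Z.of_nat (S N))%Z)).
    rewrite sl_app, sl_mapS.
    rewrite (sl_ext _ _ (fun n => f (Z.of_nat n - Z.of_nat N)%Z)).
    2:{ intro n. f_equal. lia. }
    rewrite IH. unfold sl; cbn [fold_right zs].
    replace (Z.of_nat 0 - Z.of_nat (S N))%Z with (- Z.of_nat (S N))%Z by lia.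
    replace (Z.of_nat (1 + (2 * N + 1)) - Z.of_nat (S N))%Z with (Z.of_nat (S N)) by lia.
    cbn [seq fold_right]. replace (Z.of_nat (1 + (2 * N + 1)) - Z.of_nat (S N))%Z with (Z.of_nat (S N)) by lia. ring.
Qed.

Lemma zs_ext N f g : (forall z, f z = g z) -> zs N f = zs N g.
Proof. intro H; induction N; cbn [zs]; rewrite ?IHN, ?H; auto. Qed.

Lemma zs_ext_in N f g :
  (forall z, (Z.abs z <= Z.of_nat N)%Z -> f z = g z) -> zs N f = zs N g.
Proof.
  induction N; intro H; cbn [zs].
  - apply H; lia.
  - rewrite IHN by (intros; apply H; lia). rewrite !H by lia. auto.
Qed.

Lemma zs_plus N f g : zs N (fun z => f z + g z) = zs N f + zs N g.
Proof. induction N; cbn [zs]; rewrite ?IHN; ring. Qed.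

Lemma zs_minus N f g : zs N (fun z => f z - g z) = zs N f - zs N g.
Proof. induction N; cbn [zs]; rewrite ?IHN; ring. Qed.

Lemma zs_scal N c f : zs N (fun z => c * f z) = c * zs N f.
Proof. induction N; cbn [zs]; rewrite ?IHN; ring. Qed.

Lemma zs_scalr N c f : zs N (fun z => f z * c) = zs N f * c.
Proof. induction N; cbn [zs]; rewrite ?IHN; ring. Qed.

Lemma zs_zero N : zs N (fun _ => 0) = 0.
Proof. induction N; cbn [zs]; rewrite ?IHN; ring. Qed.

Lemma zs_le N f g : (forall z, f z <= g z) -> zs N f <= zs N g.
Proof. intro H; induction N; cbn [zs]; auto. pose proof (H (Z.of_nat (S N))); pose proof (H (- Z.of_nat (S N))%Z); lra. Qed.

Lemma zs_nonneg N f : (forall z, 0 <= f z) -> 0 <= zs N f.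
Proof. intro H. rewrite <- (zs_zero N). apply zs_le; auto. Qed.

Lemma zs_abs N f : Rabs (zs N f) <= zs N (fun z => Rabs (f z)).
Proof.
  induction N; cbn [zs]; [lra|].
  eapply Rle_trans; [apply Rabs_triang|].
  eapply Rle_trans; [apply Rplus_le_compat_r; apply Rabs_triang|]. lra.
Qed.

Lemma zs_refl N f : zs N (fun z => f (- z)%Z) = zs N f.
Proof.
  induction N; cbn [zs].
  - auto.
  - rewrite IHN. rewrite Z.opp_involutive. ring.
Qed.

Lemma zs_shift1 N f :
  zs N (fun z => f (z + 1)%Z) = zs N f - f (- Z.of_nat N)%Z + f (Z.of_nat N + 1)%Z.
Proof.
  induction N; cbn [zs].
  - simpl. ring.
  - rewrite IHN.
    replace (- Z.of_nat (S N) + 1)%Z with (- Z.of_nat N)%Z by lia.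
    replace (Z.of_nat N + 1)%Z with (Z.of_nat (S N)) by lia.
    replace (Z.of_nat (S N) + 1)%Z with (Z.of_nat (S N) + 1)%Z by lia. ring.
Qed.

Lemma zs_shift_nat K N c f :
  (forall z, (Z.of_nat K < Z.abs z)%Z -> f z = 0) -> (K + c <= N)%nat ->
  zs N (fun z => f (z + Z.of_nat c)%Z) = zs N f.
Proof.
  revert f; induction c; intros f Hf Hc.
  - apply zs_ext. intro z; f_equal; lia.
  - rewrite (zs_ext _ _ (fun z => (fun w => f (w + Z.of_nat c)%Z) (z + 1)%Z)).
    2:{ intro z; cbn [zs]; f_equal; lia. }
    rewrite (zs_shift1 N (fun w => f (w + Z.of_nat c)%Z)). rewrite IHc; auto; try lia.
    rewrite !Hf by lia. ring.
Qed.

Lemma zs_shift K N c f :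
  (forall z, (Z.of_nat K < Z.abs z)%Z -> f z = 0) -> (Z.of_nat K + Z.abs c <= Z.of_nat N)%Z ->
  zs N (fun z => f (z + c)%Z) = zs N f.
Proof.
  intros Hf Hc.
  destruct (Z_le_gt_dec 0 c).
  - replace c with (Z.of_nat (Z.to_nat c)) by lia.
    apply (zs_shift_nat K); auto. lia.
  - rewrite <- (zs_refl N f).
    rewrite <- (zs_refl N (fun z => f (z + c)%Z)).
    set (h := fun z => f (- z)%Z).
    rewrite (zs_ext _ _ (fun z => h (z + Z.of_nat (Z.to_nat (- c)))%Z)).
    2:{ intro z. unfold h. f_equal. lia. }
    apply (zs_shift_nat K). { intros z Hz; unfold h; apply Hf; lia. } lia.
Qed.

Definition zind (N : nat) (z : Z) : R := if (Z.abs z <=? Z.of_nat N)%Z then 1 else 0.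

Lemma zs_restrict N M f : (N <= M)%nat -> zs M (fun z => zind N z * f z) = zs N f.
Proof.
  induction 1.
  - apply zs_ext_in. intros z Hz. unfold zind. rewrite (proj2 (Z.leb_le _ _) Hz). ring.
  - cbn [zs]. rewrite IHle. unfold zind.
    rewrite (proj2 (Z.leb_gt _ _)) by lia.
    rewrite (proj2 (Z.leb_gt _ _)) by lia. ring.
Qed.

Lemma zs_ge_term N f z0 : (forall z, 0 <= f z) -> (Z.abs z0 <= Z.of_nat N)%Z -> f z0 <= zs N f.
Proof.
  intros H. induction N; intro Hz; cbn [zs].
  - replace z0 with 0%Z by lia. lra.
  - destruct (Z_le_gt_dec (Z.abs z0) (Z.of_nat N)).
    + pose proof (IHN l). pose proof (H (Z.of_nat (S N))); pose proof (H (- Z.of_nat (S N))%Z); lra.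
    + pose proof (zs_nonneg N f H).
      pose proof (H (Z.of_nat (S N))); pose proof (H (- Z.of_nat (S N))%Z).
      destruct (Z_le_gt_dec 0 z0).
      * replace z0 with (Z.of_nat (S N)) by lia. lra.
      * replace z0 with (- Z.of_nat (S N))%Z by lia. lra.
Qed.

Lemma zs_swap N M (F : Z -> Z -> R) :
  zs N (fun i => zs M (fun j => F i j)) = zs M (fun j => zs N (fun i => F i j)).
Proof.
  induction N; cbn [zs].
  - auto.
  - rewrite IHN. rewrite <- !zs_plus. auto.
Qed.

Lemma zs_derive N (F : R -> Z -> R) (F' : Z -> R) x :
  (forall z, is_derive (fun A => F A z) x (F' z)) ->
  is_derive (fun A => zs N (F A)) x (zs N F').
Proof.
  intro H; induction N; cbn [zs].
  - apply H.
  - apply (is_derive_plus (fun A => zs N (F A) + F A (Z.of_nat (S N)))).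
    + apply (is_derive_plus (fun A => zs N (F A))); auto.
    + apply H.
Qed.

Lemma exp_mono x y : x <= y -> exp x <= exp y.
Proof. intro H; destruct (Req_dec x y); [subst; lra|]. left; apply exp_increasing; lra. Qed.

Lemma ln_le_sub1 y : 0 < y -> ln y <= y - 1.
Proof. intro H. pose proof (exp_ineq1_le (ln y)). rewrite exp_ln in H0; lra. Qed.

Lemma key_ineq b x : 0 < b -> 1 <= x ->
  b * exp (- (b + 1) * ln (x + 1)) <= exp (- b * ln x) - exp (- b * ln (x + 1)).
Proof.
  intros Hb Hx.
  assert (E1 : exp (- (b + 1) * ln (x + 1)) = exp (- b * ln (x + 1)) / (x + 1)).
  { replace (- (b + 1) * ln (x + 1)) with (- b * ln (x + 1) + - ln (x + 1)) by ring.
    rewrite exp_plus, exp_Ropp, exp_ln by lra. unfold Rdiv; auto. }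
  assert (E2 : exp (- b * ln x) = exp (- b * ln (x + 1)) * exp (b * (ln (x + 1) - ln x))).
  { rewrite <- exp_plus. f_equal. ring. }
  assert (L1 : 1 / (x + 1) <= ln (x + 1) - ln x).
  { pose proof (ln_le_sub1 (x / (x + 1))). rewrite ln_div in H by lra.
    assert (x / (x + 1) - 1 = - (1 / (x + 1))) by (field; lra).
    assert (0 < x / (x+1)) by (apply Rdiv_lt_0_compat; lra). lra. }
  pose proof (exp_ineq1_le (b * (ln (x + 1) - ln x))).
  pose proof (exp_pos (- b * ln (x + 1))).
  rewrite E1, E2.
  set (e := exp (- b * ln (x + 1))) in *.
  set (w := exp (b * (ln (x + 1) - ln x))) in *.
  assert (b * (1 / (x + 1)) <= b * (ln (x + 1) - ln x)) by (apply Rmult_le_compat_l; lra).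
  assert (e * (b * (1 / (x + 1))) <= e * (w - 1)) by (apply Rmult_le_compat_l; lra).
  replace (b * (e / (x + 1))) with (e * (b * (1 / (x + 1)))) by (field; lra). lra.
Qed.

Definition phi (a : R) (z : Z) : R := exp (- a * ln (1 + IZR (Z.abs z))).

Lemma phi_pos a z : 0 < phi a z.
Proof. apply exp_pos. Qed.

Lemma phi_S a M : phi a (Z.of_nat (S M)) = exp (- a * ln (INR M + 2)) /\
                  phi a (- Z.of_nat (S M))%Z = exp (- a * ln (INR M + 2)).
Proof.
  unfold phi. rewrite Z.abs_opp. rewrite Z.abs_eq by lia.
  rewrite <- INR_IZR_INZ, S_INR. split; do 3 f_equal; ring.
Qed.

Definition Ebound (b : R) (M : nat) : R :=
  zs M (phi (b + 1)) + 2 / b * exp (- b * ln (INR M + 1)).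

Lemma Ebound_S b M : 0 < b -> Ebound b (S M) <= Ebound b M.
Proof.
  intro Hb. unfold Ebound. cbn [zs]. destruct (phi_S (b + 1) M) as [-> ->].
  pose proof (key_ineq b (INR M + 1) Hb).
  assert (1 <= INR M + 1) by (pose proof (pos_INR M); lra).
  specialize (H H0). rewrite S_INR.
  replace (INR M + 1 + 1) with (INR M + 2) in * by ring.
  assert (2 / b * (b * exp (- (b + 1) * ln (INR M + 2))) = 2 * exp (- (b + 1) * ln (INR M + 2))) by (field; lra).
  assert (2 / b * (b * exp (- (b + 1) * ln (INR M + 2))) <=
          2 / b * (exp (- b * ln (INR M + 1)) - exp (- b * ln (INR M + 2)))).
  { apply Rmult_le_compat_l; auto. apply Rlt_le, Rdiv_lt_0_compat; lra. }
  lra.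
Qed.

Lemma Ebound_mono b N M : 0 < b -> (N <= M)%nat -> Ebound b M <= Ebound b N.
Proof. intros Hb H; induction H; [lra|]. pose proof (Ebound_S b m Hb); lra. Qed.

Definition Sphi (b : R) := 1 + 2 / b.

Lemma zs_phi_bound b M : 0 < b -> zs M (phi (b + 1)) <= Sphi b.
Proof.
  intro Hb. pose proof (Ebound_mono b 0 M Hb ltac:(lia)).
  unfold Ebound, Sphi in *. cbn [zs] in H. simpl INR in H.
  replace (0 + 1) with 1 in H by ring. rewrite ln_1 in H.
  unfold phi in H. simpl (Z.abs 0) in H. replace (1 + IZR 0) with 1 in H by (simpl; ring).
  rewrite ln_1 in H. rewrite !Rmult_0_r, exp_0 in H.
  pose proof (exp_pos (- b * ln (INR M + 1))).
  assert (0 < 2 / b) by (apply Rdiv_lt_0_compat; lra).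
  assert (0 <= 2 / b * exp (- b * ln (INR M + 1))) by (apply Rmult_le_pos; lra). unfold phi; lra.
Qed.

Definition tailb (b : R) (N : nat) : R := 2 / b * exp (- b * ln (INR N + 1)).

Lemma tail1 (b : R) (N M : nat) : 0 < b ->
  zs M (fun z => (1 - zind N z) * phi (b + 1) z) <= tailb b N.
Proof.
  intro Hb. unfold tailb.
  assert (0 <= 2 / b * exp (- b * ln (INR N + 1))).
  { apply Rmult_le_pos; [apply Rlt_le, Rdiv_lt_0_compat; lra | apply Rlt_le, exp_pos]. }
  destruct (Nat.le_gt_cases N M).
  - rewrite (zs_ext _ _ (fun z => phi (b + 1) z - zind N z * phi (b + 1) z)) by (intro; ring).
    rewrite zs_minus, zs_restrict by auto.
    pose proof (Ebound_mono b N M Hb H0). unfold Ebound in H1.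
    pose proof (exp_pos (- b * ln (INR M + 1))).
    assert (0 <= 2 / b * exp (- b * ln (INR M + 1))) by (apply Rmult_le_pos; [apply Rlt_le, Rdiv_lt_0_compat; lra | lra]).
    lra.
  - rewrite (zs_ext_in _ _ (fun _ => 0)). { rewrite zs_zero; auto. }
    intros z Hz. unfold zind. rewrite (proj2 (Z.leb_le _ _)) by lia. ring.
Qed.

Definition B (N : nat) (g : Z -> Z -> Z -> R) : R :=
  zs N (fun i => zs N (fun j => zs N (fun k => g i j k))).

Lemma B_ext N f g : (forall i j k, f i j k = g i j k) -> B N f = B N g.
Proof. intro H. unfold B. apply zs_ext; intro; apply zs_ext; intro; apply zs_ext; intro; auto. Qed.

Lemma B_plus N f g : B N (fun i j k => f i j k + g i j k) = B N f + B N g.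
Proof.
  unfold B. rewrite <- zs_plus. apply zs_ext; intro. rewrite <- zs_plus. apply zs_ext; intro.
  apply zs_plus.
Qed.

Lemma B_minus N f g : B N (fun i j k => f i j k - g i j k) = B N f - B N g.
Proof.
  unfold B. rewrite <- zs_minus. apply zs_ext; intro. rewrite <- zs_minus. apply zs_ext; intro.
  apply zs_minus.
Qed.

Lemma B_scal N c f : B N (fun i j k => c * f i j k) = c * B N f.
Proof.
  unfold B. rewrite <- zs_scal. apply zs_ext; intro. rewrite <- zs_scal. apply zs_ext; intro.
  apply zs_scal.
Qed.

Lemma B_le N f g : (forall i j k, f i j k <= g i j k) -> B N f <= B N g.
Proof. intro H. unfold B. apply zs_le; intro; apply zs_le; intro; apply zs_le; intro; auto. Qed.

Lemma B_nonneg N f : (forall i j k, 0 <= f i j k) -> 0 <= B N f.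
Proof. intro H. unfold B. apply zs_nonneg; intro; apply zs_nonneg; intro; apply zs_nonneg; intro; auto. Qed.

Lemma B_abs N f : Rabs (B N f) <= B N (fun i j k => Rabs (f i j k)).
Proof.
  unfold B. eapply Rle_trans; [apply zs_abs|]. apply zs_le; intro.
  eapply Rle_trans; [apply zs_abs|]. apply zs_le; intro. apply zs_abs.
Qed.

Definition ind3 N i j k := zind N i * zind N j * zind N k.

Lemma B_restrict N M g : (N <= M)%nat -> B M (fun i j k => ind3 N i j k * g i j k) = B N g.
Proof.
  intro H. unfold B, ind3.
  rewrite (zs_ext _ _ (fun i => zind N i * zs M (fun j => zind N j * zs M (fun k => zind N k * g i j k)))).
  2:{ intro i. rewrite <- zs_scal. apply zs_ext; intro j. rewrite <- Rmult_assoc, <- zs_scal. apply zs_ext; intro k. ring. }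
  rewrite zs_restrict by auto. apply zs_ext; intro i.
  rewrite zs_restrict by auto. apply zs_ext; intro j.
  apply zs_restrict; auto.
Qed.

Lemma B_prod N a b c : B N (fun i j k => a i * b j * c k) = zs N a * zs N b * zs N c.
Proof.
  unfold B.
  rewrite (zs_ext _ _ (fun i => a i * (zs N b * zs N c))).
  { rewrite zs_scalr. ring. }
  intro i. rewrite (zs_ext _ _ (fun j => (a i * b j) * zs N c)).
  { rewrite zs_scalr. rewrite zs_scal. ring. }
  intro j. rewrite <- zs_scal. apply zs_ext; intro; ring.
Qed.

Lemma ind_01 N z : zind N z = 0 \/ zind N z = 1.
Proof. unfold zind. destruct (Z.abs z <=? Z.of_nat N)%Z; auto. Qed.

Definition P3 (b : R) i j k := phi (b + 1) i * phi (b + 1) j * phi (b + 1) k.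

Definition tau (b : R) (N : nat) := 3 * (Sphi b * Sphi b) * tailb b N.

Lemma tail3 (b : R) (N M : nat) : 0 < b ->
  B M (fun i j k => (1 - ind3 N i j k) * P3 b i j k) <= tau b N.
Proof.
  intro Hb.
  eapply Rle_trans.
  { apply (B_le _ _ (fun i j k => ((1 - zind N i) * phi (b+1) i) * phi (b+1) j * phi (b+1) k
                                + phi (b+1) i * ((1 - zind N j) * phi (b+1) j) * phi (b+1) k
                                + phi (b+1) i * phi (b+1) j * ((1 - zind N k) * phi (b+1) k))).
    intros i j k. unfold ind3, P3.
    pose proof (phi_pos (b+1) i); pose proof (phi_pos (b+1) j); pose proof (phi_pos (b+1) k).
    assert (0 < phi (b + 1) i * phi (b + 1) j * phi (b + 1) k) by (repeat apply Rmult_lt_0_compat; auto).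
    destruct (ind_01 N i) as [-> | ->]; destruct (ind_01 N j) as [-> | ->];
      destruct (ind_01 N k) as [-> | ->]; nra. }
  rewrite !B_plus, !B_prod.
  pose proof (zs_phi_bound b M Hb) as Hs.
  pose proof (tail1 b N M Hb) as Ht.
  assert (0 <= zs M (phi (b + 1))) by (apply zs_nonneg; intro; apply Rlt_le, phi_pos).
  assert (0 <= zs M (fun z => (1 - zind N z) * phi (b + 1) z)).
  { apply zs_nonneg; intro z. pose proof (phi_pos (b+1) z). destruct (ind_01 N z) as [-> | ->]; nra. }
  set (S := zs M (phi (b + 1))) in *.
  set (T := zs M (fun z => (1 - zind N z) * phi (b + 1) z)) in *.
  unfold tau.
  assert (S * S <= Sphi b * Sphi b) by (apply Rmult_le_compat; auto).
  assert (T * (S * S) <= tailb b N * (Sphi b * Sphi b)) by (apply Rmult_le_compat; auto; nra).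
  nra.
Qed.

Lemma B_cauchy b (g : Z -> Z -> Z -> R) C : 0 < b ->
  (forall i j k, Rabs (g i j k) <= C * P3 b i j k) ->
  forall N M, (N <= M)%nat -> Rabs (B M g - B N g) <= C * tau b N.
Proof.
  intros Hb Hg N M HNM.
  assert (HC : 0 <= C).
  { specialize (Hg 0%Z 0%Z 0%Z). pose proof (Rabs_pos (g 0%Z 0%Z 0%Z)).
    unfold P3 in Hg. pose proof (phi_pos (b+1) 0).
    assert (0 < phi (b + 1) 0 * phi (b + 1) 0 * phi (b + 1) 0) by (repeat apply Rmult_lt_0_compat; auto).
    destruct (Rle_or_lt 0 C); auto. nra. }
  rewrite <- (B_restrict N M g HNM), <- B_minus.
  eapply Rle_trans; [apply B_abs|].
  eapply Rle_trans.
  2:{ apply Rmult_le_compat_l; [auto| apply (tail3 b N M Hb)]. }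
  rewrite <- B_scal. apply B_le. intros i j k.
  replace (g i j k - ind3 N i j k * g i j k) with ((1 - ind3 N i j k) * g i j k) by ring.
  rewrite Rabs_mult.
  assert (ind3 N i j k = 0 \/ ind3 N i j k = 1).
  { unfold ind3. destruct (ind_01 N i) as [-> | ->]; destruct (ind_01 N j) as [-> | ->];
      destruct (ind_01 N k) as [-> | ->]; [left|left|left|left|left|left|left|right]; ring. }
  specialize (Hg i j k).
  destruct H as [-> | ->].
  - rewrite Rminus_0_r, Rabs_R1. lra.
  - rewrite Rminus_diag, Rabs_R0. pose proof (Rabs_pos (g i j k)). nra.
Qed.

Lemma tl_to0 b : 0 < b -> forall eps, 0 < eps -> exists N0, forall N, (N0 <= N)%nat -> tailb b N < eps.
Proof.
  intros Hb eps He.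
  set (d := eps * b / 2).
  assert (Hd : 0 < d) by (unfold d; apply Rdiv_lt_0_compat; [apply Rmult_lt_0_compat|]; lra).
  destruct (INR_unbounded (exp (- ln d / b))) as [N0 HN0].
  exists N0. intros N HN.
  apply le_INR in HN.
  assert (H1 : exp (- ln d / b) < INR N + 1) by lra.
  assert (H2 : - ln d / b < ln (INR N + 1)).
  { rewrite <- (ln_exp (- ln d / b)). apply ln_increasing; auto. apply exp_pos. }
  assert (H3 : - b * ln (INR N + 1) < ln d).
  { assert (b * (- ln d / b) < b * ln (INR N + 1)) by (apply Rmult_lt_compat_l; auto).
    replace (b * (- ln d / b)) with (- ln d) in H by (field; lra). lra. }
  apply exp_increasing in H3. rewrite exp_ln in H3 by auto.
  unfold tailb, d in *.
  assert (0 < 2 / b) by (apply Rdiv_lt_0_compat; lra).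
  apply (Rmult_lt_compat_l (2 / b)) in H3; auto.
  replace (2 / b * (eps * b / 2)) with eps in H3 by (field; lra). lra.
Qed.

Lemma tau_to0 b K : 0 < b -> 0 <= K -> forall eps, 0 < eps ->
  exists N0, forall N, (N0 <= N)%nat -> K * tau b N < eps.
Proof.
  intros Hb HK eps He.
  set (K' := K * (3 * (Sphi b * Sphi b)) + 1).
  assert (0 <= Sphi b * Sphi b) by nra.
  assert (0 < K') by (unfold K'; nra).
  destruct (tl_to0 b Hb (eps / K')) as [N0 HN0]. { apply Rdiv_lt_0_compat; lra. }
  exists N0; intros N HN. specialize (HN0 N HN).
  unfold tau.
  assert (0 <= tailb b N).
  { unfold tailb. apply Rmult_le_pos; [apply Rlt_le, Rdiv_lt_0_compat; lra | apply Rlt_le, exp_pos]. }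
  apply (Rmult_lt_compat_l K') in HN0; auto.
  replace (K' * (eps / K')) with eps in HN0 by (field; lra).
  unfold K' in HN0. nra.
Qed.

Lemma lim_of_cauchy (F : nat -> R) (t : nat -> R) :
  (forall N M, (N <= M)%nat -> Rabs (F M - F N) <= t N) ->
  (forall eps, 0 < eps -> exists N0, forall N, (N0 <= N)%nat -> t N < eps) ->
  Un_cv F (real (Lim_seq F)) /\ forall N, Rabs (real (Lim_seq F) - F N) <= t N.
Proof.
  intros HC Ht.
  assert (Cauchy_crit F).
  { intros eps He. destruct (Ht (eps / 2)) as [N0 HN0]; [lra|].
    exists N0. intros n m Hn Hm. unfold Rdist.
    pose proof (HC N0 n Hn). pose proof (HC N0 m Hm). specialize (HN0 N0 (le_n _)).
    replace (F n - F m) with ((F n - F N0) - (F m - F N0)) by ring.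
    eapply Rle_lt_trans; [apply Rabs_triang|]. rewrite Rabs_Ropp. lra. }
  destruct (Rcomplete.R_complete F H) as [l Hl].
  assert (E : real (Lim_seq F) = l).
  { rewrite (is_lim_seq_unique F l); auto. apply is_lim_seq_Reals; auto. }
  rewrite E. split; auto.
  intro N. apply Rle_plus_epsilon. intros eps He.
  destruct (Hl eps He) as [N1 HN1].
  set (n := Nat.max N N1).
  specialize (HN1 n ltac:(unfold n; lia)). unfold Rdist in HN1.
  specialize (HC N n ltac:(unfold n; lia)).
  replace (l - F N) with (- (F n - l) + (F n - F N)) by ring.
  eapply Rle_trans; [apply Rabs_triang|]. rewrite Rabs_Ropp. lra.
Qed.

Lemma B_conv b (g : Z -> Z -> Z -> R) C : 0 < b ->
  (forall i j k, Rabs (g i j k) <= C * P3 b i j k) ->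
  Un_cv (fun N => B N g) (real (Lim_seq (fun N => B N g))) /\
  forall N, Rabs (real (Lim_seq (fun N => B N g)) - B N g) <= C * tau b N.
Proof.
  intros Hb Hg.
  assert (HC : 0 <= C).
  { specialize (Hg 0%Z 0%Z 0%Z). pose proof (Rabs_pos (g 0%Z 0%Z 0%Z)).
    unfold P3 in Hg. pose proof (phi_pos (b+1) 0).
    assert (0 < phi (b + 1) 0 * phi (b + 1) 0 * phi (b + 1) 0) by (repeat apply Rmult_lt_0_compat; auto).
    destruct (Rle_or_lt 0 C); auto. nra. }
  apply lim_of_cauchy.
  - intros N M HNM; apply (B_cauchy b g C Hb Hg N M HNM).
  - apply tau_to0; auto.
Qed.

Definition iz (i j k : Z) : bool := (Z.eqb i 0 && Z.eqb j 0 && Z.eqb k 0)%bool.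
Definition aa (i j : Z) : R := (IZR (i + j))^2.

Lemma iz_false i j k : iz i j k = false -> (i <> 0 \/ j <> 0 \/ k <> 0)%Z.
Proof. unfold iz. intro H. destruct (Z.eqb_spec i 0), (Z.eqb_spec j 0), (Z.eqb_spec k 0); simpl in H; try discriminate; auto. Qed.

Lemma sq_pos_Z x : (x <> 0)%Z -> 0 < (IZR x)^2.
Proof. intro H. pose proof (not_0_IZR x H). simpl. rewrite Rmult_1_r. apply Rsqr_pos_lt in H0. exact H0. Qed.

Lemma Q_pos A i j k : iz i j k = false -> 0 < A -> 0 < Qform A i j k.
Proof.
  intros Hz HA. unfold Qform.
  pose proof (pow2_ge_0 (IZR (i + j))); pose proof (pow2_ge_0 (IZR (j + k))); pose proof (pow2_ge_0 (IZR (i + k))).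
  destruct (Z.eq_dec (i + j) 0).
  - destruct (Z.eq_dec (j + k) 0).
    + destruct (Z.eq_dec (i + k) 0).
      * apply iz_false in Hz. lia.
      * pose proof (sq_pos_Z _ n). nra.
    + pose proof (sq_pos_Z _ n). nra.
  - pose proof (sq_pos_Z _ n). nra.
Qed.


Definition E0 (s a b A : R) := exp (s * ln ((A + 1) / (A * a + b))).
Definition Xr (a b A : R) := 1 / (A + 1) - a / (A * a + b).
Definition T1r (s a b A : R) := E0 s a b A * (s * Xr a b A).
Definition T2r (s a b A : R) :=
  E0 s a b A * (s ^ 2 * (Xr a b A) ^ 2 + s * (- (1 / (A + 1)) ^ 2 + (a / (A * a + b)) ^ 2)).

Lemma d0 s a b A : 0 < A -> 0 < A * a + b ->
  is_derive (E0 s a b) A (T1r s a b A).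
Proof.
  intros HA HQ. unfold T1r, E0, Xr.
  auto_derive.
  - split; [lra|]. split; auto. apply Rmult_lt_0_compat; [lra| apply Rinv_0_lt_compat; lra].
  - unfold Rdiv. set (e := exp _). field. lra.
Qed.

Lemma d1 s a b A : 0 < A -> 0 < A * a + b ->
  is_derive (T1r s a b) A (T2r s a b A).
Proof.
  intros HA HQ. unfold T2r, T1r, E0, Xr.
  auto_derive.
  - repeat split; try lra. apply Rmult_lt_0_compat; [lra| apply Rinv_0_lt_compat; lra].
  - unfold Rdiv. set (e := exp _). clearbody e. field. lra.
Qed.

Definition bb (i j k : Z) : R := (IZR (j + k))^2 + (IZR (i + k))^2.

Lemma Qform_ab A i j k : Qform A i j k = A * aa i j + bb i j k.
Proof. unfold Qform, aa, bb. ring. Qed.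

Lemma term_E0 A s i j k : term A s i j k = if iz i j k then 0 else E0 s (aa i j) (bb i j k) A.
Proof. unfold term, E0, Rpower. rewrite Qform_ab. fold (iz i j k). destruct (iz i j k); auto. Qed.

Definition T1 s A i j k := if iz i j k then 0 else T1r s (aa i j) (bb i j k) A.
Definition T2 s A i j k := if iz i j k then 0 else T2r s (aa i j) (bb i j k) A.

Lemma T0_derive s A i j k : 0 < A -> is_derive (fun A => term A s i j k) A (T1 s A i j k).
Proof.
  intro HA. apply (is_derive_ext (fun A => if iz i j k then 0 else E0 s (aa i j) (bb i j k) A)).
  { intro t. rewrite term_E0; auto. }
  unfold T1. destruct (iz i j k) eqn:Hz.
  - auto_derive; auto.
  - apply d0; auto. rewrite <- Qform_ab. apply Q_pos; auto.
Qed.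

Lemma T1_derive s A i j k : 0 < A -> is_derive (fun A => T1 s A i j k) A (T2 s A i j k).
Proof.
  intro HA. unfold T1, T2. destruct (iz i j k) eqn:Hz.
  - auto_derive; auto.
  - apply d1; auto. rewrite <- Qform_ab. apply Q_pos; auto.
Qed.

Lemma cb (A I J K c : R) : 2/5 <= A <= 1 -> 1 <= (I+J)^2+(J+K)^2+(I+K)^2 ->
  (c = I \/ c = J \/ c = K) -> (1 + Rabs c)^2 <= 9*(A*(I+J)^2 + (J+K)^2 + (I+K)^2).
Proof.
  intros HA HS Hc.
  assert (H1 : (1 + Rabs c)^2 <= 2 + 2 * c^2).
  { pose proof (pow2_abs c). pose proof (pow2_ge_0 (Rabs c - 1)). nra. }
  assert (H2 : 4 * c^2 <= 3 * ((I+J)^2+(J+K)^2+(I+K)^2)).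
  { destruct Hc as [-> | [-> | ->]].
    - pose proof (pow2_ge_0 ((I+J) + (J+K))); pose proof (pow2_ge_0 ((J+K) + (I+K)));
      pose proof (pow2_ge_0 ((I+J) - (I+K))). nra.
    - pose proof (pow2_ge_0 ((I+J) - (J+K))); pose proof (pow2_ge_0 ((I+J) + (I+K)));
      pose proof (pow2_ge_0 ((J+K) + (I+K))). nra.
    - pose proof (pow2_ge_0 ((I+J) + (J+K))); pose proof (pow2_ge_0 ((I+J) + (I+K)));
      pose proof (pow2_ge_0 ((J+K) - (I+K))). nra. }
  assert (H3 : A * ((I+J)^2+(J+K)^2+(I+K)^2) <= A*(I+J)^2 + (J+K)^2 + (I+K)^2).
  { pose proof (pow2_ge_0 (J+K)); pose proof (pow2_ge_0 (I+K)). nra. }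
  nra.
Qed.

Lemma sq_ge1_Z n : (n <> 0)%Z -> 1 <= (IZR n)^2.
Proof.
  intro H. replace ((IZR n)^2) with (IZR (n * n)) by (rewrite mult_IZR; ring).
  apply IZR_le. nia.
Qed.

Lemma S_ge1 i j k : iz i j k = false -> 1 <= IZR (i+j)^2 + IZR (j+k)^2 + IZR (i+k)^2.
Proof.
  intro Hz.
  pose proof (pow2_ge_0 (IZR (i + j))); pose proof (pow2_ge_0 (IZR (j + k))); pose proof (pow2_ge_0 (IZR (i + k))).
  destruct (Z.eq_dec (i + j) 0) as [e1|n1].
  - destruct (Z.eq_dec (j + k) 0) as [e2|n2].
    + destruct (Z.eq_dec (i + k) 0) as [e3|n3].
      * apply iz_false in Hz. lia.
      * pose proof (sq_ge1_Z _ n3). lra.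
    + pose proof (sq_ge1_Z _ n2). lra.
  - pose proof (sq_ge1_Z _ n1). lra.
Qed.

Lemma coord_ln A i j k c : 2/5 <= A <= 1 -> iz i j k = false -> (c = i \/ c = j \/ c = k) ->
  2 * ln (1 + IZR (Z.abs c)) <= ln (9 * (A * aa i j + bb i j k)).
Proof.
  intros HA Hz Hc.
  pose proof (S_ge1 i j k Hz) as HS.
  assert (Hb : (1 + IZR (Z.abs c))^2 <= 9 * (A * aa i j + bb i j k)).
  { unfold aa, bb. rewrite !plus_IZR in *. rewrite abs_IZR.
    replace (A * (IZR i + IZR j) ^ 2 + ((IZR j + IZR k) ^ 2 + (IZR i + IZR k) ^ 2))
      with (A * (IZR i + IZR j) ^ 2 + (IZR j + IZR k) ^ 2 + (IZR i + IZR k) ^ 2) by ring.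
    apply cb; auto. destruct Hc as [-> | [-> | ->]]; auto. }
  assert (Hp : 0 < 1 + IZR (Z.abs c)).
  { pose proof (IZR_le 0 (Z.abs c) ltac:(lia)). lra. }
  replace (2 * ln (1 + IZR (Z.abs c))) with (ln ((1 + IZR (Z.abs c))^2)).
  - apply ln_le; auto. apply pow_lt; auto.
  - rewrite ln_pow by auto. simpl. ring.
Qed.

Lemma E0_bound s A i j k : 0 < s -> 2/5 <= A <= 3/5 -> iz i j k = false ->
  E0 s (aa i j) (bb i j k) A <= exp (s * ln 18) * P3 (2 * s / 3 - 1) i j k.
Proof.
  intros Hs HA Hz.
  assert (HQ : 0 < A * aa i j + bb i j k) by (rewrite <- Qform_ab; apply Q_pos; auto; lra).
  set (Q := A * aa i j + bb i j k) in *.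
  assert (HA' : 2/5 <= A <= 1) by lra.
  pose proof (coord_ln A i j k i HA' Hz ltac:(auto)) as Li.
  pose proof (coord_ln A i j k j HA' Hz ltac:(auto)) as Lj.
  pose proof (coord_ln A i j k k HA' Hz ltac:(auto)) as Lk.
  fold Q in Li, Lj, Lk.
  unfold P3, phi. replace (2 * s / 3 - 1 + 1) with (2 * s / 3) by ring.
  rewrite <- !exp_plus.
  unfold E0. fold Q.
  apply exp_mono.
  rewrite ln_div by lra.
  assert (ln (A + 1) <= ln 2) by (apply ln_le; lra).
  assert (E18 : ln 18 = ln 2 + ln 9) by (rewrite <- ln_mult by lra; f_equal; lra).
  assert (E9 : ln (9 * Q) = ln 9 + ln Q) by (rewrite ln_mult; lra).
  rewrite E9 in Li, Lj, Lk. rewrite E18.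
  set (li := ln (1 + IZR (Z.abs i))) in *.
  set (lj := ln (1 + IZR (Z.abs j))) in *.
  set (lk := ln (1 + IZR (Z.abs k))) in *.
  assert (s * ln (A + 1) <= s * ln 2) by (apply Rmult_le_compat_l; lra).
  assert (s * (li + lj + lk) <= s * (3/2 * (ln 9 + ln Q))) by (apply Rmult_le_compat_l; lra).
  nra.
Qed.

Lemma Xr_bound A a b : 2/5 <= A -> 0 <= a -> 0 <= b -> 0 < A * a + b ->
  Rabs (Xr a b A) <= 5/2 /\ 0 <= a / (A * a + b) <= 5/2.
Proof.
  intros HA Ha Hb HQ. unfold Xr.
  assert (0 <= a / (A * a + b)) by (apply Rdiv_le_0_compat; lra).
  assert (a / (A * a + b) <= 5/2).
  { apply Rmult_le_reg_r with (A * a + b); auto. unfold Rdiv. rewrite Rmult_assoc, Rinv_l by lra. nra. }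
  assert (0 < 1 / (A + 1) <= 1).
  { split. apply Rdiv_lt_0_compat; lra. apply Rmult_le_reg_r with (A + 1); [lra|].
    unfold Rdiv. rewrite Rmult_assoc, Rinv_l by lra. lra. }
  split; auto. apply Rabs_le. lra.
Qed.

Definition bexp (s : R) := 2 * s / 3 - 1.
Definition C0 (s : R) := exp (s * ln 18).

Lemma P3_pos b i j k : 0 < P3 b i j k.
Proof. unfold P3. repeat apply Rmult_lt_0_compat; apply phi_pos. Qed.

Lemma aa_nonneg i j : 0 <= aa i j.
Proof. apply pow2_ge_0. Qed.
Lemma bb_nonneg i j k : 0 <= bb i j k.
Proof. unfold bb. pose proof (pow2_ge_0 (IZR (j+k))); pose proof (pow2_ge_0 (IZR (i+k))). lra. Qed.

Lemma term_bound s A i j k : 0 < s -> 2/5 <= A <= 3/5 ->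
  Rabs (term A s i j k) <= C0 s * P3 (bexp s) i j k.
Proof.
  intros Hs HA. rewrite term_E0. destruct (iz i j k) eqn:Hz.
  - rewrite Rabs_R0. pose proof (P3_pos (bexp s) i j k). pose proof (exp_pos (s * ln 18)). unfold C0. nra.
  - rewrite Rabs_pos_eq by (apply Rlt_le, exp_pos). apply E0_bound; auto.
Qed.

Lemma T1_bound s A i j k : 0 < s -> 2/5 <= A <= 3/5 ->
  Rabs (T1 s A i j k) <= (5/2 * s * C0 s) * P3 (bexp s) i j k.
Proof.
  intros Hs HA. unfold T1. pose proof (P3_pos (bexp s) i j k). pose proof (exp_pos (s * ln 18)).
  destruct (iz i j k) eqn:Hz.
  - rewrite Rabs_R0. unfold C0. assert (0 <= 5/2*s*exp (s * ln 18)) by nra. nra.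
  - pose proof (E0_bound s A i j k Hs HA Hz). fold (C0 s) (bexp s) in H1.
    assert (HQ : 0 < A * aa i j + bb i j k) by (rewrite <- Qform_ab; apply Q_pos; auto; lra).
    destruct (Xr_bound A (aa i j) (bb i j k) ltac:(lra) (aa_nonneg i j) (bb_nonneg i j k) HQ) as [HX _].
    unfold T1r. pose proof (exp_pos (s * ln ((A + 1) / (A * aa i j + bb i j k)))).
    fold (E0 s (aa i j) (bb i j k) A) in H2.
    rewrite Rabs_mult, Rabs_pos_eq by lra. rewrite Rabs_mult, (Rabs_pos_eq s) by lra.
    assert (0 <= Rabs (Xr (aa i j) (bb i j k) A)) by apply Rabs_pos.
    assert (s * Rabs (Xr (aa i j) (bb i j k) A) <= s * (5/2)) by (apply Rmult_le_compat_l; lra).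
    assert (E0 s (aa i j) (bb i j k) A * (s * Rabs (Xr (aa i j) (bb i j k) A)) <=
            (C0 s * P3 (bexp s) i j k) * (s * (5/2))) by (apply Rmult_le_compat; [unfold E0; apply Rlt_le, exp_pos | apply Rmult_le_pos; [lra|apply Rabs_pos] | exact H1 | lra]).
    nra.
Qed.

Lemma T2_bound s A i j k : 0 < s -> 2/5 <= A <= 3/5 ->
  Rabs (T2 s A i j k) <= ((7 * s^2 + 8 * s) * C0 s) * P3 (bexp s) i j k.
Proof.
  intros Hs HA. unfold T2. pose proof (P3_pos (bexp s) i j k). pose proof (exp_pos (s * ln 18)).
  destruct (iz i j k) eqn:Hz.
  - rewrite Rabs_R0. unfold C0. assert (0 <= (7 * s^2 + 8 * s)*exp (s * ln 18)) by nra. nra.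
  - pose proof (E0_bound s A i j k Hs HA Hz). fold (C0 s) (bexp s) in H1.
    assert (HQ : 0 < A * aa i j + bb i j k) by (rewrite <- Qform_ab; apply Q_pos; auto; lra).
    destruct (Xr_bound A (aa i j) (bb i j k) ltac:(lra) (aa_nonneg i j) (bb_nonneg i j k) HQ) as [HX Ha].
    unfold T2r. pose proof (exp_pos (s * ln ((A + 1) / (A * aa i j + bb i j k)))).
    fold (E0 s (aa i j) (bb i j k) A) in H2.
    set (X := Xr (aa i j) (bb i j k) A) in *.
    set (u := aa i j / (A * aa i j + bb i j k)) in *.
    assert (0 < 1 / (A + 1) <= 1).
    { split. apply Rdiv_lt_0_compat; lra. apply Rmult_le_reg_r with (A + 1); [lra|].
      unfold Rdiv. rewrite Rmult_assoc, Rinv_l by lra. lra. }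
    set (w := 1 / (A + 1)) in *.
    assert (HX2 : X^2 <= 25/4) by (rewrite <- pow2_abs; pose proof (Rabs_pos X); nra).
    assert (Hin : Rabs (s ^ 2 * X ^ 2 + s * (- w ^ 2 + u ^ 2)) <= 7 * s^2 + 8 * s).
    { assert (0 <= w^2 <= 1) by (split; nra).
      assert (0 <= u^2 <= 25/4) by (split; nra).
      assert (0 <= X^2) by apply pow2_ge_0.
      assert (0 <= s^2) by apply pow2_ge_0.
      assert (s^2 * X^2 <= s^2 * (25/4)) by (apply Rmult_le_compat_l; lra).
      assert (0 <= s^2 * X^2) by (apply Rmult_le_pos; lra).
      assert (s * (- w ^ 2 + u ^ 2) <= s * (25/4)) by (apply Rmult_le_compat_l; lra).
      assert (s * (-1) <= s * (- w ^ 2 + u ^ 2)) by (apply Rmult_le_compat_l; lra).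
      apply Rabs_le. split; nra. }
    rewrite Rabs_mult, Rabs_pos_eq by lra.
    assert (E0 s (aa i j) (bb i j k) A * Rabs (s ^ 2 * X ^ 2 + s * (- w ^ 2 + u ^ 2)) <=
            (C0 s * P3 (bexp s) i j k) * (7 * s^2 + 8 * s)).
    { apply Rmult_le_compat; auto; try lra. apply Rabs_pos. }
    nra.
Qed.

Definition supp (K : nat) (g : Z -> Z -> Z -> R) :=
  forall i j k, (Z.of_nat K < Z.abs i \/ Z.of_nat K < Z.abs j \/ Z.of_nat K < Z.abs k)%Z -> g i j k = 0.

Lemma B_tau K M g : supp K g -> (2 * K <= M)%nat ->
  B M (fun i j k => g (i + k)%Z (j + k)%Z (- k)%Z) = B M g.
Proof.
  intros Hs HM. unfold B.
  rewrite (zs_ext _ _ (fun i => zs M (fun k => zs M (fun j => g (i + k)%Z (j + k)%Z (- k)%Z)))).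
  2:{ intro i. apply zs_swap. }
  rewrite (zs_swap M M (fun i k => zs M (fun j => g (i + k)%Z (j + k)%Z (- k)%Z))).
  rewrite (zs_ext M (fun i => zs M (fun j => zs M (fun k => g i j k))) (fun i => zs M (fun k => zs M (fun j => g i j k)))).
  2:{ intro i. apply zs_swap. }
  rewrite (zs_swap M M (fun i k => zs M (fun j => g i j k))).
  rewrite <- (zs_refl M (fun k => zs M (fun i => zs M (fun j => g i j k)))).
  apply zs_ext. intro k.
  destruct (Z_le_gt_dec (Z.abs k) (Z.of_nat K)).
  - rewrite (zs_ext _ _ (fun i => zs M (fun j => g (i + k)%Z j (- k)%Z))).
    2:{ intro i. apply (zs_shift K M k (fun j => g (i + k)%Z j (- k)%Z)).
        - intros z Hz. apply Hs. lia.
        - lia. }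
    apply (zs_shift K M k (fun i => zs M (fun j => g i j (- k)%Z))).
    + intros z Hz. rewrite <- (zs_zero M). apply zs_ext. intro j. apply Hs. lia.
    + lia.
  - rewrite (zs_ext _ _ (fun _ => 0)). 2:{ intro i. rewrite <- (zs_zero M). apply zs_ext. intro j. apply Hs. lia. }
    rewrite (zs_ext _ (fun i => zs M (fun j => g i j (- k)%Z)) (fun _ => 0)).
    2:{ intro i. rewrite <- (zs_zero M). apply zs_ext. intro j. apply Hs. lia. }
    auto.
Qed.

Lemma B_rho K M g : supp K g -> (2 * K <= M)%nat ->
  B M (fun i j k => g i (- j)%Z (j + k)%Z) = B M g.
Proof.
  intros Hs HM. unfold B. apply zs_ext. intro i.
  rewrite <- (zs_refl M (fun j => zs M (fun k => g i j k))).
  apply zs_ext. intro j.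
  destruct (Z_le_gt_dec (Z.abs j) (Z.of_nat K)).
  - rewrite (zs_ext _ _ (fun k => g i (- j)%Z (k + j)%Z)) by (intro; f_equal; lia).
    apply (zs_shift K M j (fun k => g i (- j)%Z k)).
    + intros z Hz. apply Hs. lia.
    + lia.
  - rewrite (zs_ext _ _ (fun _ => 0)) by (intro k; apply Hs; lia).
    rewrite (zs_ext _ (fun k => g i (- j)%Z k) (fun _ => 0)) by (intro k; apply Hs; lia).
    auto.
Qed.

Lemma ind3_01 N i j k : ind3 N i j k = 0 \/ ind3 N i j k = 1.
Proof.
  unfold ind3. destruct (ind_01 N i) as [-> | ->]; destruct (ind_01 N j) as [-> | ->];
    destruct (ind_01 N k) as [-> | ->]; [left|left|left|left|left|left|left|right]; ring.
Qed.

Lemma ind_1 N z : (Z.abs z <= Z.of_nat N)%Z -> zind N z = 1.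
Proof. intro H. unfold zind. rewrite (proj2 (Z.leb_le _ _) H). auto. Qed.

Lemma ind_0 N z : (Z.of_nat N < Z.abs z)%Z -> zind N z = 0.
Proof. intro H. unfold zind. rewrite (proj2 (Z.leb_gt _ _) H). auto. Qed.

Lemma ind3_1 N i j k : (Z.abs i <= Z.of_nat N)%Z -> (Z.abs j <= Z.of_nat N)%Z -> (Z.abs k <= Z.of_nat N)%Z ->
  ind3 N i j k = 1.
Proof. intros. unfold ind3. rewrite !ind_1 by auto. ring. Qed.

Lemma ind3_ne0 N i j k : ind3 N i j k <> 0 ->
  (Z.abs i <= Z.of_nat N)%Z /\ (Z.abs j <= Z.of_nat N)%Z /\ (Z.abs k <= Z.of_nat N)%Z.
Proof.
  intro H. unfold ind3 in H.
  destruct (Z_le_gt_dec (Z.abs i) (Z.of_nat N)); [|rewrite (ind_0 N i) in H by lia; lra].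
  destruct (Z_le_gt_dec (Z.abs j) (Z.of_nat N)); [|rewrite (ind_0 N j) in H by lia; lra].
  destruct (Z_le_gt_dec (Z.abs k) (Z.of_nat N)); [|rewrite (ind_0 N k) in H by lia; lra].
  auto.
Qed.

Lemma sym_diff_bound (s1 s2 s3 : Z -> Z -> Z -> Z)
  (Hinv1 : forall i j k, s1 (s1 i j k) (s2 i j k) (s3 i j k) = i)
  (Hinv2 : forall i j k, s2 (s1 i j k) (s2 i j k) (s3 i j k) = j)
  (Hinv3 : forall i j k, s3 (s1 i j k) (s2 i j k) (s3 i j k) = k)
  (Hbnd : forall (N : Z) i j k, (Z.abs i <= N)%Z -> (Z.abs j <= N)%Z -> (Z.abs k <= N)%Z ->
    (Z.abs (s1 i j k) <= 2 * N /\ Z.abs (s2 i j k) <= 2 * N /\ Z.abs (s3 i j k) <= 2 * N)%Z)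
  (Hcv : forall K M g, supp K g -> (2 * K <= M)%nat ->
    B M (fun i j k => g (s1 i j k) (s2 i j k) (s3 i j k)) = B M g) b f C N : 0 < b -> (forall i j k, Rabs (f i j k) <= C * P3 b i j k) ->
  Rabs (B N (fun i j k => f (s1 i j k) (s2 i j k) (s3 i j k)) - B N f) <= C * tau b (Nat.div2 N).
Proof.
  intros Hb Hf.
  assert (HC : 0 <= C).
  { specialize (Hf 0%Z 0%Z 0%Z). pose proof (Rabs_pos (f 0%Z 0%Z 0%Z)).
    unfold P3 in Hf. pose proof (phi_pos (b+1) 0).
    assert (0 < phi (b + 1) 0 * phi (b + 1) 0 * phi (b + 1) 0) by (repeat apply Rmult_lt_0_compat; auto).
    destruct (Rle_or_lt 0 C); auto. nra. }
  set (g := fun i j k => f i j k * ind3 N (s1 i j k) (s2 i j k) (s3 i j k)).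
  assert (E1 : B N (fun i j k => f (s1 i j k) (s2 i j k) (s3 i j k)) = B (4 * N) g).
  { rewrite <- (B_restrict N (4 * N)) by lia.
    rewrite <- (Hcv (2 * N)%nat (4 * N)%nat g).
    - apply B_ext. intros i j k. unfold g. rewrite Hinv1, Hinv2, Hinv3. ring.
    - intros i j k Hijk. unfold g.
      destruct (Req_dec (ind3 N (s1 i j k) (s2 i j k) (s3 i j k)) 0) as [-> | Hn]; [ring|].
      apply ind3_ne0 in Hn. destruct Hn as (h1 & h2 & h3).
      destruct (Hbnd (Z.of_nat N) _ _ _ h1 h2 h3) as (g1 & g2 & g3).
      rewrite Hinv1, Hinv2, Hinv3 in *. lia.
    - lia. }
  rewrite E1. rewrite <- (B_restrict N (4 * N) f) by lia.
  rewrite <- B_minus.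
  eapply Rle_trans; [apply B_abs|].
  eapply Rle_trans.
  2:{ apply Rmult_le_compat_l; [auto| apply (tail3 b (Nat.div2 N) (4 * N) Hb)]. }
  rewrite <- B_scal. apply B_le. intros i j k. unfold g.
  replace (f i j k * ind3 N (s1 i j k) (s2 i j k) (s3 i j k) - ind3 N i j k * f i j k)
    with (f i j k * (ind3 N (s1 i j k) (s2 i j k) (s3 i j k) - ind3 N i j k)) by ring.
  rewrite Rabs_mult. specialize (Hf i j k).
  pose proof (Rabs_pos (f i j k)).
  destruct (ind3_01 (Nat.div2 N) i j k) as [H0 | H1].
  - rewrite H0. rewrite Rminus_0_r.
    assert (Rabs (ind3 N (s1 i j k) (s2 i j k) (s3 i j k) - ind3 N i j k) <= 1).
    { destruct (ind3_01 N (s1 i j k) (s2 i j k) (s3 i j k)) as [-> | ->];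
      destruct (ind3_01 N i j k) as [-> | ->];
      [rewrite Rminus_0_r, Rabs_R0 | rewrite Rminus_0_l, Rabs_Ropp, Rabs_R1
      | rewrite Rminus_0_r, Rabs_R1 | rewrite Rminus_diag, Rabs_R0]; lra. }
    assert (Rabs (f i j k) * Rabs (ind3 N (s1 i j k) (s2 i j k) (s3 i j k) - ind3 N i j k) <= Rabs (f i j k) * 1)
      by (apply Rmult_le_compat_l; auto).
    nra.
  - assert (Hne : ind3 (Nat.div2 N) i j k <> 0) by lra.
    apply ind3_ne0 in Hne. destruct Hne as (h1 & h2 & h3).
    pose proof (Nat.div2_spec N) as _.
    assert (HN2 : (2 * Z.of_nat (Nat.div2 N) <= Z.of_nat N)%Z).
    { pose proof (Nat.div2_odd N). destruct (Nat.odd N); simpl in H0; lia. }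
    destruct (Hbnd (Z.of_nat (Nat.div2 N)) _ _ _ h1 h2 h3) as (g1 & g2 & g3).
    rewrite ind3_1 by lia. rewrite (ind3_1 N i j k) by lia. rewrite H1.
    rewrite Rminus_diag, Rabs_R0. nra.
Qed.

Lemma sym_lim (s1 s2 s3 : Z -> Z -> Z -> Z)
  (Hinv1 : forall i j k, s1 (s1 i j k) (s2 i j k) (s3 i j k) = i)
  (Hinv2 : forall i j k, s2 (s1 i j k) (s2 i j k) (s3 i j k) = j)
  (Hinv3 : forall i j k, s3 (s1 i j k) (s2 i j k) (s3 i j k) = k)
  (Hbnd : forall (N : Z) i j k, (Z.abs i <= N)%Z -> (Z.abs j <= N)%Z -> (Z.abs k <= N)%Z ->
    (Z.abs (s1 i j k) <= 2 * N /\ Z.abs (s2 i j k) <= 2 * N /\ Z.abs (s3 i j k) <= 2 * N)%Z)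
  (Hcv : forall K M g, supp K g -> (2 * K <= M)%nat ->
    B M (fun i j k => g (s1 i j k) (s2 i j k) (s3 i j k)) = B M g) b f C : 0 < b -> (forall i j k, Rabs (f i j k) <= C * P3 b i j k) ->
  Un_cv (fun N => B N (fun i j k => f (s1 i j k) (s2 i j k) (s3 i j k)) - B N f) 0.
Proof.
  intros Hb Hf eps He.
  assert (HC : 0 <= C).
  { specialize (Hf 0%Z 0%Z 0%Z). pose proof (Rabs_pos (f 0%Z 0%Z 0%Z)).
    unfold P3 in Hf. pose proof (phi_pos (b+1) 0).
    assert (0 < phi (b + 1) 0 * phi (b + 1) 0 * phi (b + 1) 0) by (repeat apply Rmult_lt_0_compat; auto).
    destruct (Rle_or_lt 0 C); auto. nra. }
  destruct (tau_to0 b C Hb HC eps He) as [N0 HN0].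
  exists (2 * N0)%nat. intros N HN. unfold Rdist. rewrite Rminus_0_r.
  eapply Rle_lt_trans; [apply (sym_diff_bound s1 s2 s3 Hinv1 Hinv2 Hinv3 Hbnd Hcv b f C N Hb Hf)|].
  apply HN0.
  pose proof (Nat.div2_odd N). destruct (Nat.odd N); simpl in H; lia.
Qed.

Lemma B_derive N (g : R -> Z -> Z -> Z -> R) g' x :
  (forall i j k, is_derive (fun A => g A i j k) x (g' i j k)) ->
  is_derive (fun A => B N (g A)) x (B N g').
Proof.
  intro H. unfold B.
  apply (zs_derive N (fun A i => zs N (fun j => zs N (fun k => g A i j k)))). intro i.
  apply (zs_derive N (fun A j => zs N (fun k => g A i j k))). intro j.
  apply (zs_derive N (fun A k => g A i j k)). intro k. auto.
Qed.

Lemma box_sum_B A s N : box_sum A s N = B N (fun i j k => term A s i j k).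
Proof.
  unfold box_sum, B. rewrite sumZ_zs. apply zs_ext; intro i.
  rewrite sumZ_zs. apply zs_ext; intro j. apply sumZ_zs.
Qed.

Lemma iz_tau i j k : iz (i + k) (j + k) (- k) = iz i j k.
Proof. unfold iz. destruct (Z.eqb_spec i 0), (Z.eqb_spec j 0), (Z.eqb_spec k 0),
  (Z.eqb_spec (i+k) 0), (Z.eqb_spec (j+k) 0), (Z.eqb_spec (-k) 0); simpl; auto; lia. Qed.

Lemma iz_rho i j k : iz i (- j) (j + k) = iz i j k.
Proof. unfold iz. destruct (Z.eqb_spec i 0), (Z.eqb_spec j 0), (Z.eqb_spec k 0),
  (Z.eqb_spec (-j) 0), (Z.eqb_spec (j+k) 0); simpl; auto; lia. Qed.

Lemma Q_tau i j k : Qform (1/2) (i + k) (j + k) (- k) = Qform (1/2) i j k.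
Proof. unfold Qform. repeat (first [rewrite plus_IZR | rewrite opp_IZR]). field. Qed.

Lemma Q_rho i j k : Qform (1/2) i (- j) (j + k) = Qform (1/2) i j k.
Proof. unfold Qform. repeat (first [rewrite plus_IZR | rewrite opp_IZR]). field. Qed.

Lemma term_tau s i j k : term (1/2) s (i + k) (j + k) (- k) = term (1/2) s i j k.
Proof. unfold term. fold (iz (i+k) (j+k) (-k)) (iz i j k). rewrite iz_tau, Q_tau. auto. Qed.

Lemma term_rho s i j k : term (1/2) s i (- j) (j + k) = term (1/2) s i j k.
Proof. unfold term. fold (iz i (-j) (j+k)) (iz i j k). rewrite iz_rho, Q_rho. auto. Qed.

Definition fW s i j k := term (1/2) s i j k / Qform (1/2) i j k * (IZR (i + j))^2.

Lemma fW_bound s i j k : 0 < s -> Rabs (fW s i j k) <= (2 * C0 s) * P3 (bexp s) i j k.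
Proof.
  intro Hs. unfold fW.
  pose proof (term_bound s (1/2) i j k Hs ltac:(lra)) as Ht.
  rewrite term_E0 in *. destruct (iz i j k) eqn:Hz.
  - unfold Rdiv. rewrite !Rmult_0_l, Rabs_R0. pose proof (P3_pos (bexp s) i j k).
    pose proof (exp_pos (s * ln 18)). unfold C0. nra.
  - assert (HQ : 0 < Qform (1/2) i j k) by (apply Q_pos; auto; lra).
    pose proof (exp_pos (s * ln ((1/2 + 1) / ((1/2) * aa i j + bb i j k)))) as He.
    fold (E0 s (aa i j) (bb i j k) (1/2)) in He.
    rewrite Rabs_pos_eq in Ht by lra.
    assert (Ha : IZR (i + j) ^ 2 <= 2 * Qform (1/2) i j k).
    { rewrite Qform_ab. unfold aa. pose proof (bb_nonneg i j k). lra. }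
    assert (0 <= IZR (i + j) ^ 2) by apply pow2_ge_0.
    assert (E : E0 s (aa i j) (bb i j k) (1 / 2) / Qform (1 / 2) i j k * IZR (i + j) ^ 2
              = E0 s (aa i j) (bb i j k) (1 / 2) * (IZR (i + j) ^ 2 / Qform (1 / 2) i j k)) by (field; lra).
    rewrite E.
    assert (IZR (i + j) ^ 2 / Qform (1 / 2) i j k <= 2).
    { apply Rmult_le_reg_r with (Qform (1/2) i j k); auto. unfold Rdiv.
      rewrite Rmult_assoc, Rinv_l by lra. lra. }
    assert (0 <= IZR (i + j) ^ 2 / Qform (1 / 2) i j k) by (apply Rdiv_le_0_compat; lra).
    rewrite Rabs_pos_eq by nra.
    assert (E0 s (aa i j) (bb i j k) (1 / 2) * (IZR (i + j) ^ 2 / Qform (1 / 2) i j k) <=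
            (C0 s * P3 (bexp s) i j k) * 2) by (apply Rmult_le_compat; lra).
    lra.
Qed.

Lemma T1_half s i j k :
  T1 s (1/2) i j k = s / 3 * ((fW s (i + k) (j + k) (- k) - fW s i j k) + (fW s i (- j) (j + k) - fW s i j k)).
Proof.
  unfold fW. rewrite term_tau, term_rho, Q_tau, Q_rho.
  unfold T1. rewrite term_E0. destruct (iz i j k) eqn:Hz.
  - unfold Rdiv. ring.
  - assert (HQ : 0 < Qform (1/2) i j k) by (apply Q_pos; auto; lra).
    rewrite Qform_ab in *. unfold T1r, Xr. set (e := E0 s (aa i j) (bb i j k) (1 / 2)).
    clearbody e. unfold aa, bb in *. repeat (first [rewrite plus_IZR in * | rewrite opp_IZR in *]). field. lra.
Qed.

Definition Dt s i j k := if iz i j k then 0 else E0 s (aa i j) (bb i j k) (1/2) * (Xr (aa i j) (bb i j k) (1/2))^2.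

Lemma T2_half s i j k : T2 s (1/2) i j k = (s^2 + s) * Dt s i j k - 4/3 * T1 s (1/2) i j k.
Proof.
  unfold T2, T1, Dt. destruct (iz i j k) eqn:Hz.
  - ring.
  - assert (HQ : 0 < Qform (1/2) i j k) by (apply Q_pos; auto; lra).
    rewrite Qform_ab in *. unfold T2r, T1r, Xr. set (e := E0 s (aa i j) (bb i j k) (1 / 2)).
    clearbody e. field. lra.
Qed.

Lemma Dt_nonneg s i j k : 0 <= Dt s i j k.
Proof. unfold Dt. destruct (iz i j k). lra. apply Rmult_le_pos. apply Rlt_le, exp_pos. apply pow2_ge_0. Qed.

Lemma Dt_001 s : 0 < Dt s 0 0 1.
Proof.
  unfold Dt. simpl (iz 0 0 1). apply Rmult_lt_0_compat. apply exp_pos.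
  unfold Xr, aa, bb. simpl. field_simplify; try lra.
Qed.

Lemma B_ge_term N g i0 j0 k0 : (forall i j k, 0 <= g i j k) ->
  (Z.abs i0 <= Z.of_nat N)%Z -> (Z.abs j0 <= Z.of_nat N)%Z -> (Z.abs k0 <= Z.of_nat N)%Z ->
  g i0 j0 k0 <= B N g.
Proof.
  intros H h1 h2 h3. unfold B.
  eapply Rle_trans; [|apply (zs_ge_term N _ i0); auto].
  2:{ intro; apply zs_nonneg; intro; apply zs_nonneg; intro; auto. }
  eapply Rle_trans; [|apply (zs_ge_term N _ j0); auto].
  2:{ intro; apply zs_nonneg; intro; auto. }
  apply zs_ge_term; auto.
Qed.

Definition rr : posreal := mkposreal (1/10) ltac:(lra).

Lemma boule_rng y : Boule (1/2) rr y -> 2/5 <= y <= 3/5.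
Proof. unfold Boule. simpl. intro H. apply Rabs_def2 in H. lra. Qed.

Lemma cv_ge (u : nat -> R) l c : Un_cv u l -> (forall N, (1 <= N)%nat -> c <= u N) -> c <= l.
Proof.
  intros Hu Hc. apply Rle_plus_epsilon. intros eps He.
  destruct (Hu eps He) as [N0 HN0]. specialize (HN0 (S N0) ltac:(lia)).
  specialize (Hc (S N0) ltac:(lia)). unfold Rdist in HN0. apply Rabs_def2 in HN0. lra.
Qed.

Lemma cv_scal (u : nat -> R) l c : Un_cv u l -> Un_cv (fun N => c * u N) (c * l).
Proof. intro H. apply CV_mult; auto. intros e He. exists 0%nat. intros. unfold Rdist. rewrite Rminus_diag, Rabs_R0. auto. Qed.

Theorem theorem3p1 (s : R) (hs : 3 / 2 < s) :
  is_derive (fun A => L A s) (1 / 2) 0 /\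
  (locally (1 / 2) (fun A => ex_derive (fun x => L x s) A) /\
   exists d2 : R, is_derive (Derive (fun x => L x s)) (1 / 2) d2 /\ 0 < d2).
Proof.
  assert (Hs : 0 < s) by lra.
  set (b := bexp s).
  assert (Hb : 0 < b) by (unfold b, bexp; lra).
  set (G := fun y => real (Lim_seq (fun N => B N (T1 s y)))).
  set (H := fun y => real (Lim_seq (fun N => B N (T2 s y)))).
  assert (HC0 : 0 < C0 s) by apply exp_pos.
  assert (cv0 : forall y, Boule (1/2) rr y -> Un_cv (fun N => B N (fun i j k => term y s i j k)) (L y s)).
  { intros y Hy. apply boule_rng in Hy.
    destruct (B_conv b (fun i j k => term y s i j k) (C0 s) Hb) as [Hc _].
    { intros; apply term_bound; auto. }
    unfold L. rewrite (Lim_seq_ext (box_sum y s) (fun N => B N (fun i j k => term y s i j k))); auto.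
    intro; apply box_sum_B. }
  assert (cv1 : forall y, Boule (1/2) rr y -> Un_cv (fun N => B N (T1 s y)) (G y)
             /\ forall N, Rabs (G y - B N (T1 s y)) <= (5/2 * s * C0 s) * tau b N).
  { intros y Hy. apply boule_rng in Hy.
    apply (B_conv b (T1 s y) (5/2 * s * C0 s) Hb). intros; apply T1_bound; auto. }
  assert (cv2 : forall y, Boule (1/2) rr y -> Un_cv (fun N => B N (T2 s y)) (H y)
             /\ forall N, Rabs (H y - B N (T2 s y)) <= ((7 * s^2 + 8 * s) * C0 s) * tau b N).
  { intros y Hy. apply boule_rng in Hy.
    apply (B_conv b (T2 s y) ((7 * s^2 + 8 * s) * C0 s) Hb). intros; apply T2_bound; auto. }
  assert (cvu1 : CVU (fun N y => B N (T1 s y)) G (1/2) rr).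
  { intros eps He. destruct (tau_to0 b (5/2 * s * C0 s) Hb ltac:(nra) eps He) as [N0 HN0].
    exists N0. intros n y Hn Hy. eapply Rle_lt_trans; [apply (proj2 (cv1 y Hy))|]. auto. }
  assert (cvu2 : CVU (fun N y => B N (T2 s y)) H (1/2) rr).
  { intros eps He.
    assert (0 <= (7 * s^2 + 8 * s) * C0 s) by (apply Rmult_le_pos; nra).
    destruct (tau_to0 b ((7 * s^2 + 8 * s) * C0 s) Hb H0 eps He) as [N0 HN0].
    exists N0. intros n y Hn Hy. eapply Rle_lt_trans; [apply (proj2 (cv2 y Hy))|]. auto. }
  assert (dL : forall y, Boule (1/2) rr y -> derivable_pt_lim (fun A => L A s) y (G y)).
  { apply (CVU_derivable (fun N y => B N (fun i j k => term y s i j k)) (fun N y => B N (T1 s y))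
             (fun A => L A s) G (1/2) rr cvu1 cv0).
    intros n x Hx. apply boule_rng in Hx. apply is_derive_Reals.
    apply (B_derive n (fun A i j k => term A s i j k)). intros; apply T0_derive; lra. }
  assert (dG : forall y, Boule (1/2) rr y -> derivable_pt_lim G y (H y)).
  { apply (CVU_derivable (fun N y => B N (T1 s y)) (fun N y => B N (T2 s y)) G H (1/2) rr cvu2).
    - intros; apply cv1; auto.
    - intros n x Hx. apply boule_rng in Hx. apply is_derive_Reals.
      apply (B_derive n (fun A i j k => T1 s A i j k)). intros; apply T1_derive; lra. }
  assert (Bh : Boule (1/2) rr (1/2)) by (unfold Boule; rewrite Rminus_diag, Rabs_R0; simpl; lra).
  assert (fb : forall i j k, Rabs (fW s i j k) <= (2 * C0 s) * P3 b i j k) by (intros; apply fW_bound; auto).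
  assert (Dtau : Un_cv (fun N => B N (fun i j k => fW s (i + k)%Z (j + k)%Z (- k)%Z) - B N (fW s)) 0).
  { eapply (sym_lim (fun i j k => (i + k)%Z) (fun i j k => (j + k)%Z) (fun i j k => (- k)%Z)).
    - intros; lia. - intros; lia. - intros; lia.
    - intros; lia.
    - intros K M g Hg HM. apply (B_tau K M g Hg HM).
    - exact Hb.
    - exact fb. }
  assert (Drho : Un_cv (fun N => B N (fun i j k => fW s i (- j)%Z (j + k)%Z) - B N (fW s)) 0).
  { eapply (sym_lim (fun i j k => i) (fun i j k => (- j)%Z) (fun i j k => (j + k)%Z)).
    - intros; lia. - intros; lia. - intros; lia.
    - intros; lia.
    - intros K M g Hg HM. apply (B_rho K M g Hg HM).
    - exact Hb.
    - exact fb. }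
  assert (cvT1 : Un_cv (fun N => B N (T1 s (1/2))) 0).
  { pose proof (cv_scal _ _ (s / 3) (CV_plus _ _ _ _ Dtau Drho)) as Hc.
    replace (s / 3 * (0 + 0)) with 0 in Hc by ring.
    intros e He. destruct (Hc e He) as [N0 HN0]. exists N0. intros n Hn.
    specialize (HN0 n Hn). 
    rewrite (B_ext n (T1 s (1/2)) (fun i j k => s / 3 * ((fW s (i + k)%Z (j + k)%Z (- k)%Z - fW s i j k) + (fW s i (- j)%Z (j + k)%Z - fW s i j k)))).
    2:{ intros; apply T1_half. }
    rewrite B_scal, B_plus, !B_minus. exact HN0. }
  assert (G0 : G (1/2) = 0).
  { apply (UL_sequence (fun N => B N (T1 s (1/2)))); [apply cv1; auto| exact cvT1]. }
  assert (H0pos : 0 < H (1/2)).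
  { assert (cvD : Un_cv (fun N => B N (Dt s)) ((H (1/2) + 4/3 * 0) / (s^2 + s))).
    { assert (Hc : Un_cv (fun N => / (s^2 + s) * (B N (T2 s (1/2)) + 4/3 * B N (T1 s (1/2))))
                      (/ (s^2 + s) * (H (1/2) + 4/3 * 0))).
      { apply cv_scal. apply CV_plus. apply cv2; auto. apply cv_scal; auto. }
      intros e He. destruct (Hc e He) as [N0 HN0]. exists N0. intros n Hn.
      specialize (HN0 n Hn).
      rewrite (B_ext n (T2 s (1/2)) (fun i j k => (s^2 + s) * Dt s i j k - 4/3 * T1 s (1/2) i j k)) in HN0.
      2:{ intros; apply T2_half. }
      rewrite B_minus, !B_scal in HN0.
      replace (/ (s ^ 2 + s) * ((s ^ 2 + s) * B n (Dt s) - 4 / 3 * B n (T1 s (1 / 2)) + 4 / 3 * B n (T1 s (1 / 2))))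
        with (B n (Dt s)) in HN0 by (field; nra).
      unfold Rdiv. rewrite Rmult_comm. exact HN0. }
    pose proof (cv_ge _ _ (Dt s 0 0 1) cvD) as Hge.
    assert (Dt s 0 0 1 <= (H (1 / 2) + 4 / 3 * 0) / (s ^ 2 + s)).
    { apply Hge. intros N HN. apply B_ge_term; [apply Dt_nonneg| | |]; simpl; lia. }
    pose proof (Dt_001 s).
    assert (0 < (H (1 / 2) + 4 / 3 * 0) / (s ^ 2 + s)) by lra.
    assert (0 < s^2 + s) by nra.
    apply Rmult_lt_compat_r with (r := s^2 + s) in H2; auto.
    unfold Rdiv in H2. rewrite Rmult_0_l, Rmult_assoc, Rinv_l in H2 by lra. lra. }
  assert (bb2 : forall t, ball (1/2) rr t -> Boule (1/2) rr t).
  { intros t Ht. exact Ht. }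
  split; [|split].
  - apply is_derive_Reals. pose proof (dL _ Bh) as HH. rewrite G0 in HH. exact HH.
  - exists rr. intros y Hy. exists (G y). apply is_derive_Reals. apply dL. apply bb2; auto.
  - exists (H (1/2)). split; auto.
    apply (is_derive_ext_loc G).
    + exists rr. intros t Ht. symmetry. apply is_derive_unique. apply is_derive_Reals. apply dL. apply bb2; auto.
    + apply is_derive_Reals. apply dG; auto.
Qed.
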